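(* Let $k=2m+1$ and $l=2n+1$ be odd integers, and let $\pi_1(k,l)=\langle a,b \mid a w_k^n b = w_k^{n+1}\rangle$ with $w_k=(ab^{-1})^m ab (a^{-1}b)^m$ be the link group of the double twist link $J(k,l)$. For a representation $\rho:\pi_1(k,l)\to \mathrm{SL}_2(\mathbb C)$ put $x=\operatorname{tr}\rho(a)$, $y=\operatorname{tr}\rho(b)$, $z=\operatorname{tr}\rho(ab^{-1})$. Then: (1) The vanishing set of $xyz+4-x^2-y^2-z^2$ in $\mathbb C^3(x,y,z)$ is the set of characters of reducible representations $\pi_1(k,l)\to\mathrm{SL}_2(\mathbb C)$. (2) A natural model for the algebraic set $X_{irr}(k,l)$ is the vanishing set in $\mathbb C^3(x,y,z)$ of \[ S_n(t)S_{m-1}(z)-S_{n-1}(t)S_m(z),\] where \[t=\left( xS_m(z)-yS_{m-1}(z) \right)\left( yS_m(z)-xS_{m-1}(z) \right)-z\left(S^2_m(z)+S^2_{m-1}(z)\right)+4S_m(z)S_{m-1}(z).\]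
   Context: $J(k,l)$ is the two-bridge link with continued fraction $[k,-l]$ (the double twist link with $k$ and $l$ half twists in its two twist boxes); for $k,l$ both odd it has two components. The $\mathrm{SL}_2(\mathbb C)$ character variety $X(k,l)$ is the set of characters $\chi_\rho(\gamma)=\operatorname{tr}\rho(\gamma)$ of representations $\rho:\pi_1(k,l)\to\mathrm{SL}_2(\mathbb C)$; via $\chi\mapsto(\chi(a),\chi(b),\chi(ab^{-1}))$ it is identified with an algebraic subset of $\mathbb C^3(x,y,z)$. $X_{irr}(k,l)$ denotes the closure of the set of characters of irreducible representations. The Chebyshev polynomials $S_j(\omega)$ are defined for all integers $j$ by $S_0=1$, $S_1=\omega$, $S_{j+1}(\omega)=\omega S_j(\omega)-S_{j-1}(\omega)$. *)

(* Defs.v *)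
From HB Require Import structures.
From mathcomp Require Import all_boot all_order all_algebra.
From mathcomp Require Import mpoly.
Set Implicit Arguments. Unset Strict Implicit. Unset Printing Implicit Defensive.
Import Order.TTheory GRing.Theory Num.Theory.
Local Open Scope ring_scope.

Fixpoint chebN (R : ringType) (j : nat) (w : R) : R :=
  match j with
  | 0%N => 1
  | S p => match p with
           | 0%N => w
           | S q => w * chebN p w - chebN q w
           end
  end.

(* Extension to all integers by the same recursion:
   S_{-1} = 0 and S_{-(j+2)} = - S_j (Negz j denotes -(j+1)). *)
Definition cheb (R : ringType) (j : int) (w : R) : R :=
  match j with
  | Posz k => chebN k w
  | Negz 0 => 0
  | Negz (S k) => - chebN k w
  end.

Definition wordW (C : fieldType) (m : int) (A B : 'M[C]_2) : 'M[C]_2 :=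
  (A * B^-1) ^ m * (A * B) * (A^-1 * B) ^ m.

(* A pair (A,B) = (rho(a), rho(b)) defines a representation
   pi_1(k,l) = < a, b | a w^n b = w^(n+1) > -> SL_2(C). *)
Definition is_rep (C : fieldType) (m n : int) (A B : 'M[C]_2) : Prop :=
  \det A = 1 /\ \det B = 1 /\
  A * (wordW m A B) ^ n * B = (wordW m A B) ^ (n + 1).

Definition reducible (C : fieldType) (A B : 'M[C]_2) : Prop :=
  exists v : 'cV[C]_2, v != 0 /\
    exists a b : C, A *m v = a *: v /\ B *m v = b *: v.

Definition charpt (C : fieldType) (A B : 'M[C]_2) : C * C * C :=
  (\tr A, \tr B, \tr (A * B^-1)).

Definition red_chars (C : fieldType) (m n : int) (p : C * C * C) : Prop :=
  exists A B : 'M[C]_2, is_rep m n A B /\ reducible A B /\ charpt A B = p.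

Definition irr_chars (C : fieldType) (m n : int) (p : C * C * C) : Prop :=
  exists A B : 'M[C]_2, is_rep m n A B /\ ~ reducible A B /\ charpt A B = p.

Definition pt3 (C : ringType) (p : C * C * C) : 'I_3 -> C :=
  fun i => match val i with 0%N => p.1.1 | 1%N => p.1.2 | _ => p.2 end.

Definition zariski_closure (C : comRingType) (S : C * C * C -> Prop)
    (p : C * C * C) : Prop :=
  forall f : {mpoly C[3]},
    (forall q, S q -> f.@[pt3 q] = 0) -> f.@[pt3 p] = 0.

Definition X_irr (C : fieldType) (m n : int) (p : C * C * C) : Prop :=
  zariski_closure (irr_chars m n) p.

Definition tvar (C : ringType) (m : int) (x y z : C) : C :=
  (x * cheb m z - y * cheb (m - 1) z) * (y * cheb m z - x * cheb (m - 1) z)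
  - z * (cheb m z ^+ 2 + cheb (m - 1) z ^+ 2)
  + 4 * cheb m z * cheb (m - 1) z.

Definition Pirr (C : ringType) (m n : int) (x y z : C) : C :=
  let t := tvar m x y z in
  cheb n t * cheb (m - 1) z - cheb (n - 1) t * cheb m z.

(* Main.v *)
Require Import Defs.
From HB Require Import structures.
From mathcomp Require Import all_boot all_order all_algebra.
From mathcomp Require Import mpoly.
From mathcomp Require Import ring zify.
Import GRing.Theory Num.Theory.
Set Implicit Arguments. Unset Strict Implicit.
Local Open Scope ring_scope.

Lemma int_ind3 (P : int -> Prop) :
  P 0 -> (forall k, P k -> P (k + 1)) -> (forall k, P (k + 1) -> P k) ->
  forall k, P k.
Proof.
move=> P0 Hu Hd [j|j].
  elim: j => // j IH; have -> : Posz j.+1 = Posz j + 1 by rewrite -addn1 PoszD.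
  exact: Hu.
elim: j => [|j IH]; first by apply: Hd.
apply: Hd; suff -> : Negz j.+1 + 1 = Negz j by [].
by rewrite !NegzE -addn1 PoszD opprD -addrA subrr addr0.
Qed.

Section Cheb.
Variable R : comRingType.

Lemma cheb_neg0 (w : R) : cheb (Negz 0) w = 0. Proof. by []. Qed.

Lemma chebS (k : int) (w : R) : cheb (k + 1) w = w * cheb k w - cheb (k - 1) w.
Proof.
case: k => [j|j].
  case: j => [|j]; first by rewrite /= mulr1 subr0.
  have -> : Posz j.+1 + 1 = Posz j.+2 by rewrite -PoszD addn1.
  have -> : Posz j.+1 - 1 = Posz j by rewrite -addn1 PoszD addrK.
  by [].
case: j => [|j].
  have -> : Negz 0 + 1 = 0 by [].
  have -> : Negz 0 - 1 = Negz 1 by [].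
  by rewrite /= mulr0 sub0r opprK.
have -> : Negz j.+1 + 1 = Negz j by rewrite !NegzE; lia.
have -> : Negz j.+1 - 1 = Negz j.+2 by rewrite !NegzE; lia.
case: j => [|j]; first by rewrite /= mulrN mulr1 subrr.
rewrite /=; ring.
Qed.

Lemma cheb_id (k : int) (w : R) :
  cheb k w ^+ 2 - w * cheb k w * cheb (k - 1) w + cheb (k - 1) w ^+ 2 = 1.
Proof.
elim/int_ind3: k.
- rewrite /=; ring.
- move=> k IH; rewrite chebS addrK -{}IH; ring.
- move=> k; rewrite chebS addrK => <-; ring.
Qed.
End Cheb.

Section Mk2.
Variable R : comNzRingType.

Definition i0 : 'I_2 := ord0.
Definition i1 : 'I_2 := ord_max.

Definition mk2 (a b c d : R) : 'M[R]_2 :=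
  \matrix_(i, j) if (i : nat) == 0%N then (if (j : nat) == 0%N then a else b)
                 else (if (j : nat) == 0%N then c else d).

Lemma ord2P (i : 'I_2) : i = i0 \/ i = i1.
Proof. case: i => [[|[|k]] Hk]; [left|right|] => //; by apply/val_inj. Qed.

Lemma mk2E (M : 'M[R]_2) : M = mk2 (M i0 i0) (M i0 i1) (M i1 i0) (M i1 i1).
Proof.
apply/matrixP=> i j; rewrite mxE.
by case: (ord2P i) => ->; case: (ord2P j) => ->.
Qed.

Lemma mk2_inj a b c d a' b' c' d' :
  mk2 a b c d = mk2 a' b' c' d' -> [/\ a = a', b = b', c = c' & d = d'].
Proof.
move=> /matrixP H.
have := H i0 i0; have := H i0 i1; have := H i1 i0; have := H i1 i1.
by rewrite !mxE /= => -> -> -> ->.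
Qed.

Lemma mk2_eq a b c d a' b' c' d' :
  a = a' -> b = b' -> c = c' -> d = d' -> mk2 a b c d = mk2 a' b' c' d'.
Proof. by move=> -> -> -> ->. Qed.

Lemma big2 (F : 'I_2 -> R) : \sum_i F i = F i0 + F i1.
Proof. rewrite big_ord_recl big_ord1; congr (_ + F _); exact/val_inj. Qed.

Lemma mk2M a b c d a' b' c' d' :
  mk2 a b c d * mk2 a' b' c' d' =
  mk2 (a * a' + b * c') (a * b' + b * d') (c * a' + d * c') (c * b' + d * d').
Proof.
apply/matrixP=> i j; rewrite -mulmxE !mxE big2 !mxE /=.
by case: (ord2P i) => ->; case: (ord2P j) => ->.
Qed.

Lemma mk2mx a b c d a' b' c' d' :
  mk2 a b c d *m mk2 a' b' c' d' =
  mk2 (a * a' + b * c') (a * b' + b * d') (c * a' + d * c') (c * b' + d * d').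
Proof. by rewrite mulmxE mk2M. Qed.

Lemma mk2D a b c d a' b' c' d' :
  mk2 a b c d + mk2 a' b' c' d' = mk2 (a + a') (b + b') (c + c') (d + d').
Proof.
apply/matrixP=> i j; rewrite !mxE /=.
by case: (ord2P i) => ->; case: (ord2P j) => ->.
Qed.

Lemma mk2N a b c d : - mk2 a b c d = mk2 (- a) (- b) (- c) (- d).
Proof.
apply/matrixP=> i j; rewrite !mxE /=.
by case: (ord2P i) => ->; case: (ord2P j) => ->.
Qed.

Lemma mk2B a b c d a' b' c' d' :
  mk2 a b c d - mk2 a' b' c' d' = mk2 (a - a') (b - b') (c - c') (d - d').
Proof. by rewrite mk2N mk2D. Qed.

Lemma mk2Z k a b c d : k *: mk2 a b c d = mk2 (k * a) (k * b) (k * c) (k * d).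
Proof.
apply/matrixP=> i j; rewrite !mxE /=.
by case: (ord2P i) => ->; case: (ord2P j) => ->.
Qed.

Lemma mk2C k : k%:M = mk2 k 0 0 k :> 'M[R]_2.
Proof.
apply/matrixP=> i j; rewrite !mxE /=.
by case: (ord2P i) => ->; case: (ord2P j) => ->.
Qed.

Lemma mk2_1 : 1 = mk2 1 0 0 1 :> 'M[R]_2.
Proof. by rewrite -mk2C. Qed.

Lemma mk2_0 : 0 = mk2 0 0 0 0 :> 'M[R]_2.
Proof.
apply/matrixP=> i j; rewrite !mxE /=.
by case: (ord2P i) => ->; case: (ord2P j) => ->.
Qed.

Lemma mk2_tr a b c d : \tr (mk2 a b c d) = a + d.
Proof. by rewrite /mxtrace big2 !mxE. Qed.

Lemma mk2_det a b c d : \det (mk2 a b c d) = a * d - b * c.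
Proof.
rewrite (expand_det_row _ i0) big2 /cofactor !det_mx11 !mxE /=.
rewrite !expr0 !expr1 /=; ring.
Qed.

End Mk2.

Section Ids.
Variable R : comNzRingType.
Definition adj2 (M : 'M[R]_2) := (\tr M)%:M - M.

Lemma adj2_mk2 a b c d : adj2 (mk2 a b c d) = mk2 d (- b) (- c) a.
Proof. rewrite /adj2 mk2_tr mk2C mk2B; apply: mk2_eq; ring. Qed.

Ltac mk2s := rewrite ?(mk2M, mk2D, mk2B, mk2Z, mk2C, mk2N, adj2_mk2, mk2_tr, mk2_det).

Lemma idI a1 a2 a3 a4 b1 b2 b3 b4 al be :
  let A := mk2 a1 a2 a3 a4 in let B := mk2 b1 b2 b3 b4 in
  let U := A * adj2 B in let P := al *: U - be%:M in
  let W := P * A * adj2 P * B in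
  let x := \tr A in let y := \tr B in let z := \tr U in
  let dA := \det A in let dB := \det B in let S := al * z - be in
  \tr W = x*y*S*S - dB*x*x*S*al - dA*y*y*S*al + dA*dB*x*y*al*al
          - z*S*S - dA*dB*z*al*al + 4%:R*dA*dB*S*al.
Proof.
rewrite /=. mk2s. mk2s. mk2s. mk2s. mk2s. ring.
Qed.

Lemma idII a1 a2 a3 a4 b1 b2 b3 b4 al be :
  let A := mk2 a1 a2 a3 a4 in let B := mk2 b1 b2 b3 b4 in
  let U := A * adj2 B in let P := al *: U - be%:M in
  let W := P * A * adj2 P * B in
  let z := \tr U in
  A * (W * P) - (W * P) * A =
   (\tr W * al - \det P * (z * al - be)) *: (A * U - U * A).
Proof.
rewrite /=. do 6 mk2s. apply: mk2_eq; ring.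
Qed.

Lemma idE2 (X : 'M[R]_2) : X * adj2 X = (\det X)%:M /\ adj2 X * X = (\det X)%:M.
Proof. rewrite [X]mk2E; split; do 2 mk2s; apply: mk2_eq; ring. Qed.

Lemma idE1 (X : 'M[R]_2) : X * X = \tr X *: X - (\det X)%:M.
Proof. rewrite [X]mk2E; do 2 mk2s; apply: mk2_eq; ring. Qed.

Lemma idE3 (A B : 'M[R]_2) : \tr (adj2 A * B) = \tr (A * adj2 B).
Proof. rewrite [A]mk2E [B]mk2E; do 2 mk2s; ring. Qed.

Lemma idE4 (A B : 'M[R]_2) al be :
  B * (al *: (adj2 A * B) - be%:M) = (al *: adj2 (A * adj2 B) - be%:M) * B.
Proof. rewrite [A]mk2E [B]mk2E; do 4 mk2s; apply: mk2_eq; ring. Qed.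

Lemma idadjP (U : 'M[R]_2) al be : adj2 (al *: U - be%:M) = al *: adj2 U - be%:M.
Proof. rewrite [U]mk2E; do 3 mk2s; apply: mk2_eq; ring. Qed.

Lemma iddetP (U : 'M[R]_2) al be :
  \det (al *: U - be%:M) = al^+2 * \det U - al * be * \tr U + be ^+ 2.
Proof. rewrite [U]mk2E; do 3 mk2s; ring. Qed.

Lemma idE7 (A B : 'M[R]_2) :
  \tr (A * adj2 B * adj2 A * B) = \det B * \tr A ^+ 2 + \det A * \tr B ^+ 2
    + \tr (A * adj2 B) ^+ 2 - \tr A * \tr B * \tr (A * adj2 B) - 2%:R * \det A * \det B.
Proof. rewrite [A]mk2E [B]mk2E; do 4 mk2s; ring. Qed.

Lemma idE8 (K : 'M[R]_2) : \det (K - 1) = \det K - \tr K + 1.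
Proof. rewrite [K]mk2E mk2_1; do 2 mk2s; ring. Qed.

Lemma iddetadj (K : 'M[R]_2) : \det (adj2 K) = \det K.
Proof. rewrite [K]mk2E; do 2 mk2s; ring. Qed.

Lemma idtradj (K : 'M[R]_2) : \tr (adj2 K) = \tr K.
Proof. rewrite [K]mk2E; do 2 mk2s; ring. Qed.

Lemma rearr (A Wn P Q B : 'M[R]_2) :
  A * Wn * (P * Q) * B - Wn * (P * A * Q * B) = (A * (Wn * P) - (Wn * P) * A) * Q * B.
Proof. rewrite [A]mk2E [Wn]mk2E [P]mk2E [Q]mk2E [B]mk2E; do 4 mk2s; apply: mk2_eq; ring. Qed.

Lemma commlin (A W P : 'M[R]_2) c d :
  A * ((c *: W - d%:M) * P) - ((c *: W - d%:M) * P) * A =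
  c *: (A * (W * P) - (W * P) * A) - d *: (A * P - P * A).
Proof. rewrite [A]mk2E [W]mk2E [P]mk2E; do 4 mk2s; apply: mk2_eq; ring. Qed.

Lemma commP (A U : 'M[R]_2) a b :
  A * (a *: U - b%:M) - (a *: U - b%:M) * A = a *: (A * U - U * A).
Proof. rewrite [A]mk2E [U]mk2E; do 4 mk2s; apply: mk2_eq; ring. Qed.

End Ids.

Ltac mk2s := rewrite ?(mk2M, mk2D, mk2B, mk2Z, mk2C, mk2N, adj2_mk2, mk2_tr, mk2_det).


Section Mat.
Variable C : fieldType.
Implicit Types X A B : 'M[C]_2.

Lemma det1_unit X : \det X = 1 -> X \is a GRing.unit.
Proof. by move=> H; rewrite unitmxE H unitr1. Qed.

Lemma det1_inv X : \det X = 1 -> X^-1 = adj2 X.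
Proof.
move=> H; have Xu := det1_unit H.
have [h1 _] := idE2 X; rewrite H in h1.
by rewrite -[adj2 X]mul1r -(mulVr Xu) -mulrA h1 mulr1.
Qed.

Lemma lin_id X a b : a *: X - b%:M = a *: X - b *: 1.
Proof. by rewrite -scalemx1. Qed.

Lemma powCH X (k : int) : \det X = 1 ->
  X ^ k = cheb (k - 1) (\tr X) *: X - (cheb (k - 2) (\tr X))%:M.
Proof.
move=> dX; have Xu := det1_unit dX.
have CH : X * X = \tr X *: X - 1%:M by rewrite idE1 dX.
set z := \tr X.
elim/int_ind3: k.
- rewrite expr0z /= scale0r sub0r.
  by rewrite [X in _ = - X]mk2C mk2N mk2_1; apply: mk2_eq; rewrite /= ?opprK ?oppr0.
- move=> k IH; rewrite exprzDr // IH expr1z mulrBl -scalerAl CH.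
  have -> : k + 1 - 1 = (k - 1) + 1 by lia.
  have -> : k + 1 - 2 = k - 1 by lia.
  rewrite chebS.
  have -> : k - 1 - 1 = k - 2 by lia.
  rewrite /z; move: (\tr X) => w; rewrite [X]mk2E; do 4 mk2s; apply: mk2_eq; ring.
- move=> k IH.
  have -> : X ^ k = X^-1 * X ^ (1 + k) by rewrite exprzDr // expr1z mulrA mulVr // mul1r.
  rewrite addrC IH det1_inv // /adj2 mulrBr mulrBl -/z.
  rewrite -!scalerAr CH.
  have -> : k + 1 - 1 = (k - 1) + 1 by lia.
  rewrite chebS.
  have -> : k - 1 - 1 = k - 2 by lia.
  have -> : k + 1 - 2 = k - 1 by lia.
  rewrite /z; move: (\tr X) => w; rewrite [X]mk2E; do 4 mk2s; apply: mk2_eq; ring.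
Qed.

Lemma key (m n : int) A B : \det A = 1 -> \det B = 1 ->
  exists Q : 'M[C]_2, Q \is a GRing.unit /\
   A * (wordW m A B) ^ n * B - (wordW m A B) ^ (n + 1) =
   Pirr m n (\tr A) (\tr B) (\tr (A * B^-1)) *: ((A * (A * B^-1) - (A * B^-1) * A) * Q).
Proof.
move=> dA dB.
have Bi := det1_inv dB; have Ai := det1_inv dA.
rewrite /wordW Ai Bi.
set U := A * adj2 B; set V := adj2 A * B.
set x := \tr A; set y := \tr B; set z := \tr U.
have dU : \det U = 1 by rewrite detM iddetadj dA dB mulr1.
have dV : \det V = 1 by rewrite detM iddetadj dA dB mulr1.
have trV : \tr V = z by rewrite /V idE3.
set a := cheb (m - 1) z; set b := cheb (m - 2) z.
have hUm : U ^ m = a *: U - b%:M by rewrite powCH.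
have hVm : V ^ m = a *: V - b%:M.
  by rewrite powCH //; congr (cheb _ _ *: _ - (cheb _ _)%:M); exact: trV.
set P := a *: U - b%:M.
have dP : \det P = 1.
  rewrite /P iddetP dU -/z mulr1 -(cheb_id (m - 1) z) -/a.
  have -> : m - 1 - 1 = m - 2 by lia.
  rewrite -/b; ring.
have hW : U ^ m * (A * B) * V ^ m = P * A * adj2 P * B.
  rewrite hUm hVm -!mulrA /V idE4 idadjP.
  by [].
rewrite hW.
set W := P * A * adj2 P * B.
have dW : \det W = 1 by rewrite /W !detM iddetadj dP dA dB !mulr1.
have hcm : cheb m z = z * a - b.
  have -> : m = (m - 1) + 1 by lia.
  rewrite chebS -/a; congr (_ - _); rewrite /b; congr cheb; lia.
have tW : \tr W = tvar m x y z.
  have := idI (A i0 i0) (A i0 i1) (A i1 i0) (A i1 i1)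
              (B i0 i0) (B i0 i1) (B i1 i0) (B i1 i1) a b.
  rewrite /= -!mk2E -/U -/z -/P -/W -/x -/y dA dB => ->.
  rewrite /tvar hcm.
  rewrite -/a; ring.
set t := \tr W.
set c := cheb (n - 1) t; set d := cheb (n - 2) t.
have hWn : W ^ n = c *: W - d%:M by rewrite powCH.
have Wu := det1_unit dW.
have Pu := det1_unit dP.
have hPadj : P * adj2 P = 1.
  have [h1 _] := idE2 P; rewrite h1 dP; by [].
exists (adj2 P * B); split.
  by apply: det1_unit; rewrite detM iddetadj dP dB mulr1.
rewrite exprzDr // expr1z.
have e1 : A * W ^ n * B = A * W ^ n * (P * adj2 P) * B by rewrite hPadj mulr1.
rewrite e1 {2}/W rearr.
rewrite hWn commlin.
have := idII (A i0 i0) (A i0 i1) (A i1 i0) (A i1 i1)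
              (B i0 i0) (B i0 i1) (B i1 i0) (B i1 i1) a b.
rewrite /= -!mk2E -/U -/z -/P -/W -/t dP => ->.
rewrite commP !scalerA -scalerBl -!scalerAl -mulrA; congr (_ *: _).
rewrite /Pirr -tW -/t hcm -/a.
have -> : n = (n - 1) + 1 by lia.
rewrite chebS -/c.
have -> : n - 1 - 1 = n - 2 by lia.
have -> : n - 1 + 1 - 1 = n - 1 by lia.
rewrite -/c -/d; ring.
Qed.

Lemma comm_iff A B : \det A = 1 -> \det B = 1 ->
  (A * (A * B^-1) - (A * B^-1) * A = 0 <-> A * B = B * A).
Proof.
move=> dA dB; have Au := det1_unit dA; have Bu := det1_unit dB.
split.
- move/eqP; rewrite subr_eq0 => /eqP; rewrite -mulrA => /(mulrI Au) h.
  have := congr1 (fun M => B * M * B) h.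
  rewrite /= -[B * (A * B^-1) * B]mulrA -[A * B^-1 * B]mulrA mulVr // mulr1.
  by rewrite mulrA mulrV // mul1r => ->.
- move=> h; have h' : A * B^-1 = B^-1 * A by apply: commrV.
  by rewrite {1}h' mulrA subrr.
Qed.

Lemma key_iff (m n : int) A B : \det A = 1 -> \det B = 1 ->
  (is_rep m n A B <->
   (Pirr m n (\tr A) (\tr B) (\tr (A * B^-1)) = 0 \/ A * B = B * A)).
Proof.
move=> dA dB; have [Q [Qu hQ]] := key m n dA dB.
rewrite /is_rep; split.
- case=> _ [_ hr]; move: hQ; rewrite hr subrr => /esym/eqP.
  rewrite scaler_eq0 => /orP [/eqP -> | ]; first by left.
  move/eqP => h; right; apply/(comm_iff dA dB).
  by apply: (mulIr Qu); rewrite mul0r.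
- move=> H; do 2 split => //; apply/eqP; rewrite -subr_eq0 hQ.
  case: H => [-> | /(comm_iff dA dB) ->]; by rewrite ?scale0r ?mul0r ?scaler0.
Qed.
End Mat.


Section Eig.
Variable C : numClosedFieldType.
Implicit Types A B K : 'M[C]_2.

Definition cv2 (a b : C) : 'cV[C]_2 := \col_i (if (i : nat) == 0%N then a else b).

Lemma cv2E (v : 'cV[C]_2) : v = cv2 (v i0 0) (v i1 0).
Proof.
apply/matrixP=> i j; rewrite mxE (ord1 j).
by case: (ord2P i) => ->.
Qed.

Lemma mk2cv a b c d v0 v1 :
  mk2 a b c d *m cv2 v0 v1 = cv2 (a * v0 + b * v1) (c * v0 + d * v1).
Proof.
apply/matrixP=> i j; rewrite !mxE big2 !mxE /=.
by case: (ord2P i) => ->.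
Qed.

Lemma cv2Z k a b : k *: cv2 a b = cv2 (k * a) (k * b).
Proof.
apply/matrixP=> i j; rewrite !mxE.
by case: (ord2P i) => ->.
Qed.

Lemma cv2_inj a b a' b' : cv2 a b = cv2 a' b' -> a = a' /\ b = b'.
Proof.
move=> /matrixP H; have := H i0 0; have := H i1 0.
by rewrite !mxE /= => -> ->.
Qed.

Lemma cv2_eq a b a' b' : a = a' -> b = b' -> cv2 a b = cv2 a' b'.
Proof. by move=> -> ->. Qed.

Lemma cv2_neq0 a b : (a != 0) || (b != 0) -> cv2 a b != 0.
Proof.
move=> H; apply/eqP => /matrixP E; have := E i0 0; have := E i1 0.
rewrite !mxE /= => h1 h0; move: H; by rewrite h1 h0 eqxx.
Qed.

Lemma two_neq0 : (2%:R : C) != 0.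
Proof. by rewrite pnatr_eq0. Qed.

Lemma quad_root (p q : C) : exists l : C, l ^+ 2 - p * l + q = 0.
Proof.
exists ((p + sqrtC (p ^+ 2 - 4%:R * q)) / 2%:R).
have h := sqrtCK (p ^+ 2 - 4%:R * q).
move: (sqrtC _) h => s h.
have h2 := two_neq0.
have -> : ((p + s) / 2%:R) ^+ 2 - p * ((p + s) / 2%:R) + q =
          (s ^+ 2 - (p ^+ 2 - 4%:R * q)) / 4%:R.
  by field; rewrite ?pnatr_eq0.
by rewrite h subrr mul0r.
Qed.


Lemma eq_by (a b k e : C) : e = 0 -> a - b = k * e -> a = b.
Proof. by move=> -> /eqP; rewrite mulr0 subr_eq0 => /eqP. Qed.

Lemma eig1 A :
  (exists2 v : 'cV[C]_2, v != 0 & exists l, A *m v = l *: v /\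
      forall w : 'cV[C]_2, A *m w = l *: w -> exists mu, w = mu *: v)
  \/ exists l, A = l%:M.
Proof.
rewrite [A]mk2E; move: (A i0 i0) (A i0 i1) (A i1 i0) (A i1 i1) => p q r s.
have [l hl] := quad_root (p + s) (p * s - q * r).
case: (eqVneq q 0) => [q0|qn0].
  case: (eqVneq r 0) => [r0|rn0].
    case: (eqVneq p s) => [ps|pns].
      right; exists p; rewrite mk2C q0 r0 ps; by [].
    left; exists (cv2 1 0); first by apply: cv2_neq0; rewrite oner_eq0.
    exists p; split; first by rewrite mk2cv cv2Z q0 r0; apply: cv2_eq; ring.
    move=> w; rewrite [w]cv2E; move: (w i0 0) (w i1 0) => w0 w1.
    rewrite mk2cv cv2Z q0 r0 => /cv2_inj [_ h].
    have w10 : w1 = 0.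
      apply/eqP; move: h; rewrite !mul0r !add0r => /eqP.
      rewrite -subr_eq0 -mulrBl mulf_eq0 subr_eq0 eq_sym (negbTE pns) /= => ->; by [].
    by exists w0; rewrite cv2Z w10; apply: cv2_eq; ring.
  left; exists (cv2 (l - s) r); first by apply: cv2_neq0; rewrite rn0 orbT.
  exists l; split.
    rewrite mk2cv cv2Z q0; apply: cv2_eq.
      apply: (eq_by (k := -1) hl); rewrite q0; ring.
    ring.
  move=> w; rewrite [w]cv2E; move: (w i0 0) (w i1 0) => w0 w1.
  rewrite mk2cv cv2Z => /cv2_inj [_ h].
  exists (w1 / r); rewrite cv2Z; apply: cv2_eq.
    apply: (mulIf rn0); transitivity (w1 * (l - s)); last by field.
    have e0 : r * w0 + s * w1 - l * w1 = 0 by rewrite h subrr.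
    apply: (eq_by (k := 1) e0); ring.
  by rewrite divfK.
left; exists (cv2 q (l - p)); first by apply: cv2_neq0; rewrite qn0.
exists l; split.
  rewrite mk2cv cv2Z; apply: cv2_eq; first by ring.
  apply: (eq_by (k := -1) hl); ring.
move=> w; rewrite [w]cv2E; move: (w i0 0) (w i1 0) => w0 w1.
rewrite mk2cv cv2Z => /cv2_inj [h _].
exists (w0 / q); rewrite cv2Z; apply: cv2_eq.
  by rewrite divfK.
apply: (mulIf qn0); transitivity (w0 * (l - p)); last by field.
have e0 : p * w0 + q * w1 - l * w0 = 0 by rewrite h subrr.
apply: (eq_by (k := 1) e0); ring.
Qed.

Lemma comm_red A B : A * B = B * A -> reducible A B.
Proof.
move=> hAB; case: (eig1 A) => [[v v0 [l [hv huniq]]] | [l hA]].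
  have: A *m (B *m v) = l *: (B *m v).
    by rewrite mulmxA mulmxE hAB -mulmxE -mulmxA hv scalemxAr.
  move=> /huniq [mu hmu]; exists v; split => //; exists l, mu; by [].
case: (eig1 B) => [[v v0 [l' [hv _]]] | [l' hB]].
  exists v; split => //; exists l, l'; split => //.
  by rewrite hA mul_scalar_mx.
exists (cv2 1 0); split; first by apply: cv2_neq0; rewrite oner_eq0.
exists l, l'; by rewrite hA hB !mul_scalar_mx.
Qed.

Lemma adj_eig (X : 'M[C]_2) (v : 'cV[C]_2) (k : C) :
  v != 0 -> \det X = 1 -> X *m v = k *: v -> k != 0 /\ adj2 X *m v = k^-1 *: v.
Proof.
move=> v0 dX hX.
have e : adj2 X *m (X *m v) = v.
  by rewrite mulmxA mulmxE (idE2 X).2 dX mul1mx.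
rewrite hX -scalemxAr in e.
have k0 : k != 0.
  apply/eqP => k0; move: e; rewrite k0 scale0r => /esym/eqP; by rewrite (negbTE v0).
split => //; by rewrite -{2}e scalerA mulVf // scale1r.
Qed.

Lemma red_F A B : \det A = 1 -> \det B = 1 -> reducible A B ->
  \tr A * \tr B * \tr (A * B^-1) + 4 - \tr A ^+ 2 - \tr B ^+ 2 - \tr (A * B^-1) ^+ 2 = 0.
Proof.
move=> dA dB [v [v0 [al [be [hA hB]]]]].
have [a0 hAv] := adj_eig v0 dA hA.
have [b0 hBv] := adj_eig v0 dB hB.
set K := A * adj2 B * adj2 A * B.
have hK : K *m v = v.
  rewrite /K -!mulmxE -!mulmxA hB -!scalemxAr hAv -!scalemxAr hBv -!scalemxAr hA.
  rewrite !scalerA; set k := (_ * _); suff -> : k = 1 by rewrite scale1r.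
  by rewrite /k; field; rewrite a0 b0.
have hK1 : (K - 1) *m v = 0 by rewrite mulmxBl mul1mx hK subrr.
have dK1 : \det (K - 1) = 0.
  rewrite -det_tr; apply/eqP/det0P; exists v^T; first by rewrite trmx_eq0.
  by rewrite -trmx_mul hK1 trmx0.
have dK : \det K = 1 by rewrite /K !detM !iddetadj dA dB !mulr1.
rewrite idE8 dK in dK1.
have := idE7 A B; rewrite -/K dA dB (det1_inv dB) => e7.
apply: (eq_by (k := 1) dK1); rewrite e7; ring.
Qed.

End Eig.


Section Cons.
Variable C : numClosedFieldType.

Definition Fr (x y z : C) := x * y * z + 4 - x ^+ 2 - y ^+ 2 - z ^+ 2.

Lemma cons_rep (x y z : C) : exists A B : 'M[C]_2,
  [/\ \det A = 1, \det B = 1 & charpt A B = (x, y, z)].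
Proof.
have [p hp] := quad_root (x + y) (x * y - z + 2%:R).
exists (mk2 x 1 (-1) 0), (mk2 p 1 (p * (y - p) - 1) (y - p)).
have dB : \det (mk2 p 1 (p * (y - p) - 1) (y - p)) = 1 by rewrite mk2_det; ring.
split => //; first by rewrite mk2_det; ring.
rewrite /charpt (det1_inv dB); do 3 mk2s.
congr (_, _, _); try ring.
apply: (eq_by (k := 1) hp); ring.
Qed.

Lemma irr_pirr (m n : int) (A B : 'M[C]_2) : is_rep m n A B -> ~ reducible A B ->
  Pirr m n (\tr A) (\tr B) (\tr (A * B^-1)) = 0.
Proof.
move=> hr nred; have [dA [dB _]] := hr.
case/(key_iff m n dA dB): hr => // /comm_red; by [].
Qed.

Lemma pirr_irr (m n : int) (x y z : C) : Pirr m n x y z = 0 -> Fr x y z != 0 ->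
  irr_chars m n (x, y, z).
Proof.
move=> hP hF; have [A [B [dA dB hc]]] := cons_rep x y z.
exists A, B; move: (hc); rewrite /charpt => [[ex ey ez]].
split; first by apply/(key_iff m n dA dB); left; rewrite ex ey ez.
split => //; move=> /(red_F dA dB); rewrite ex ey ez => h.
by move: hF; rewrite /Fr h eqxx.
Qed.

Lemma red_Fr (m n : int) (x y z : C) : red_chars m n (x, y, z) -> Fr x y z = 0.
Proof.
move=> [A [B [[dA [dB _]] [hred hc]]]].
move: hc; rewrite /charpt => [[<- <- <-]].
exact: red_F.
Qed.

Lemma Fr_red (m n : int) (x y z : C) : Fr x y z = 0 -> red_chars m n (x, y, z).
Proof.
move=> hF.
have [s hs] := quad_root x 1; have [r hr] := quad_root y 1.
have s0 : s != 0 by apply/eqP => s0; move: hs; rewrite s0 expr0n /= mulr0 subrr add0r; apply/eqP; rewrite oner_eq0.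
have r0 : r != 0 by apply/eqP => r0; move: hr; rewrite r0 expr0n /= mulr0 subrr add0r; apply/eqP; rewrite oner_eq0.
have ex : x = s + s^-1.
  apply: (mulIf s0); rewrite mulrDl mulVf //.
  apply: (eq_by (k := -1) hs); ring.
have ey : y = r + r^-1.
  apply: (mulIf r0); rewrite mulrDl mulVf //.
  apply: (eq_by (k := -1) hr); ring.
have hz : (z - (s / r + r / s)) * (z - (s * r + (s * r)^-1)) = 0.
  apply: (eq_by (k := -1) hF); rewrite /Fr ex ey; field; by rewrite s0 r0.
set A := mk2 s 0 0 s^-1.
have dA : \det A = 1 by rewrite mk2_det mulr0 subr0 mulfV.
have red_gen (r' : C) : r' != 0 -> z = s / r' + r' / s -> y = r' + r'^-1 ->
    red_chars m n (x, y, z).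
  move=> r'0 hz' hy'.
  set B := mk2 r' 0 0 r'^-1.
  have dB : \det B = 1 by rewrite mk2_det mulr0 subr0 mulfV.
  exists A, B; split.
    apply/(key_iff m n dA dB); right; rewrite /A /B; do 2 mk2s; apply: mk2_eq; ring.
  split.
    exists (cv2 1 0); split; first by apply: cv2_neq0; rewrite oner_eq0.
    exists s, r'; rewrite /A /B !mk2cv !cv2Z; split; apply: cv2_eq; ring.
  rewrite /charpt (det1_inv dB) /A /B; do 3 mk2s.
  congr (_, _, _); [by rewrite ex | by rewrite hy' | rewrite hz'; field; by rewrite s0 r'0].
move/eqP: hz; rewrite mulf_eq0 => /orP [/eqP hz | /eqP hz]; move/eqP: hz; rewrite subr_eq0 => /eqP hz.
  by apply: (red_gen r).
apply: (red_gen r^-1); first by rewrite invr_eq0.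
  rewrite hz; field; by rewrite s0 r0.
by rewrite invrK addrC.
Qed.

End Cons.

Section Dense.
Variable C : numClosedFieldType.

Lemma poly_all_roots (q : {poly C}) : (forall u, root q u) -> q = 0.
Proof.
move=> H; apply: (@roots_geq_poly_eq0 _ q [seq i%:R | i <- iota 0 (size q)]).
- by apply/allP => u _; apply: H.
- rewrite map_inj_uniq ?iota_uniq //; move=> i j /eqP; rewrite eqr_nat => /eqP; by [].
- by rewrite size_map size_iota.
Qed.

Definition i30 : 'I_3 := ord0.
Definition i31 : 'I_3 := Ordinal (isT : (1 < 3)%N).
Definition i32 : 'I_3 := Ordinal (isT : (2 < 3)%N).

Lemma big3 (F : 'I_3 -> C) : \prod_i F i = F i30 * F i31 * F i32.
Proof.
rewrite big_ord_recl big_ord_recl big_ord_recl big_ord0 mulr1 mulrA.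
by congr (_ * F _ * F _); apply: val_inj.
Qed.

Lemma mdeg3 (mm : 'X_{1..3}) : mdeg mm = (mm i30 + mm i31 + mm i32)%N.
Proof.
rewrite mdegE big_ord_recl big_ord_recl big_ord_recl big_ord0 addn0 addnA.
by congr (_ + mm _ + mm _)%N; apply: val_inj.
Qed.

Definition lpt (X Y Z : {poly C}) (u : C) : C * C * C :=
  (X.[u] / u, Y.[u] / u, Z.[u] / u).

Lemma laurent (f : {mpoly C[3]}) (X Y Z : {poly C}) :
  exists N (g : {poly C}), forall u, u != 0 ->
    g.[u] = u ^+ N * f.@[pt3 (lpt X Y Z u)].
Proof.
elim/mpolyind: f => [|c mm p _ _ [N [g Hg]]].
  by exists 0%N, 0 => u _; rewrite horner0 meval0 mulr0.
exists (N + mdeg mm)%N, (c *: (X ^+ mm i30 * Y ^+ mm i31 * Z ^+ mm i32) * 'X^N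
                          + g * 'X^(mdeg mm)).
move=> u u0; rewrite hornerD !hornerM hornerZ !hornerM !hornerXn !horner_exp Hg //.
rewrite mevalD mevalZ mevalX big3 /pt3 /lpt /= mdeg3.
rewrite !expr_div_n !exprD.
field.
by rewrite !expf_neq0.
Qed.

Lemma dense (f : {mpoly C[3]}) (X Y Z h : {poly C}) : h != 0 ->
  (forall u, u != 0 -> ~~ root h u -> f.@[pt3 (lpt X Y Z u)] = 0) ->
  f.@[pt3 (lpt X Y Z 1)] = 0.
Proof.
move=> h0 H; have [N [g Hg]] := laurent f X Y Z.
have q0 : 'X * h * g = 0.
  apply: poly_all_roots => u; rewrite !rootM rootX.
  case: (eqVneq u 0) => [-> //|u0] /=.
  case: (boolP (root h u)) => //= hu.
  by apply/rootP; rewrite Hg // H // mulr0.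
have g0 : g = 0.
  by move/eqP: q0; rewrite !mulf_eq0 polyX_eq0 (negbTE h0) /= => /eqP.
have := Hg 1 (oner_neq0 _); by rewrite g0 horner0 expr1n mul1r.
Qed.

End Dense.

Section Morph.
Variables (R S : comNzRingType) (f : {rmorphism R -> S}).

Lemma chebN_morph j w : f (chebN j w) = chebN j (f w).
Proof.
suff : f (chebN j w) = chebN j (f w) /\ f (chebN j.+1 w) = chebN j.+1 (f w) by case.
elim: j => [|j [IH1 IH2]]; first by rewrite /= rmorph1.
split => //; have E (T : comNzRingType) (v : T) : chebN j.+2 v = v * chebN j.+1 v - chebN j v by [].
by rewrite !E rmorphB rmorphM IH1 IH2.

Qed.

Lemma cheb_morph k w : f (cheb k w) = cheb k (f w).
Proof.
case: k => [j|[|j]] /=; first exact: chebN_morph.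
  by rewrite rmorph0.
by rewrite rmorphN chebN_morph.
Qed.

Lemma Pirr_morph m n x y z : f (Pirr m n x y z) = Pirr m n (f x) (f y) (f z).
Proof.
rewrite /Pirr /tvar !(rmorphB, rmorphM, rmorphD, cheb_morph, rmorphXn, rmorph_nat, rmorph1).
by [].
Qed.
End Morph.

Section PirrM.
Variable C : numClosedFieldType.

Lemma meval_Pirr (m n : int) (p : C * C * C) :
  (Pirr m n ('X_i30 : {mpoly C[3]}) 'X_i31 'X_i32).@[pt3 p] = Pirr m n p.1.1 p.1.2 p.2.
Proof. by rewrite (Pirr_morph (meval (pt3 p))); congr Pirr; apply: mevalXU. Qed.

Lemma meval_pt3 (p : C * C * C) (g : {mpoly C[3]}) : True.
Proof. by []. Qed.
End PirrM.

Section Curves.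
Variable C : numClosedFieldType.

Definition LL (m : int) (z x y : C) :=
  (x * cheb m z - y * cheb (m - 1) z) * (y * cheb m z - x * cheb (m - 1) z).

Lemma Pirr_LL (m n : int) (z x y x' y' : C) : LL m z x y = LL m z x' y' ->
  Pirr m n x y z = Pirr m n x' y' z.
Proof. by rewrite /Pirr /tvar /LL => ->. Qed.

Lemma lin3 (a e1 e2 e3 k1 k2 k3 : C) : e1 = 0 -> e2 = 0 -> e3 = 0 ->
  a = k1 * e1 + k2 * e2 + k3 * e3 -> a = 0.
Proof. by move=> -> -> ->; rewrite !mulr0 !addr0. Qed.

Lemma q2_neq0 (A B K : C) : A != 0 ->
  (A *: ('X - 1) ^+ 2 + B *: ('X - 1) + K%:P : {poly C}) != 0.
Proof.
move=> A0; apply/eqP => H.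
have e (w : C) : (A *: ('X - 1) ^+ 2 + B *: ('X - 1) + K%:P).[w] = 0 by rewrite H horner0.
have e1 := e 1; have e2 := e 2%:R; have e3 := e 3%:R.
rewrite !(hornerD, hornerZ, horner_exp, hornerN, hornerX, hornerC, hornerXn) in e1 e2 e3.
have : 2%:R * A = 0.
  apply: (lin3 (k1 := 1) (k2 := -2%:R) (k3 := 1) e1 e2 e3); ring.
by move/eqP; rewrite mulf_eq0 pnatr_eq0 (negbTE A0).
Qed.

Lemma q4_neq0 (A B K : C) : A != 0 ->
  (A *: 'X ^+ 4 + B *: 'X ^+ 2 + K%:P : {poly C}) != 0.
Proof.
move=> A0; apply/eqP => H.
have e (w : C) : (A *: 'X ^+ 4 + B *: 'X ^+ 2 + K%:P).[w] = 0 by rewrite H horner0.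
have e0 := e 0; have e1 := e 1; have e2 := e (sqrtC 2%:R).
rewrite !(hornerD, hornerZ, horner_exp, hornerN, hornerX, hornerC, hornerXn) in e0 e1 e2.
have s2 : sqrtC (2%:R : C) ^+ 2 = 2%:R by rewrite sqrtCK.
have s4 : sqrtC (2%:R : C) ^+ 4 = 2%:R * 2%:R by rewrite (_ : 4%N = 2 * 2)%N // exprM s2 expr2.
rewrite s2 s4 in e2.
have : 2%:R * A = 0.
  apply: (lin3 (k1 := 1) (k2 := -2%:R) (k3 := 1) e0 e1 e2); ring.
by move/eqP; rewrite mulf_eq0 pnatr_eq0 (negbTE A0).
Qed.

Lemma line_case (m n : int) (x0 y0 z0 d1 d2 : C) (f : {mpoly C[3]}) :
  (forall q, irr_chars m n q -> f.@[pt3 q] = 0) ->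
  Pirr m n x0 y0 z0 = 0 ->
  z0 * d1 * d2 - d1 ^+ 2 - d2 ^+ 2 != 0 ->
  (forall w, LL m z0 (x0 + d1 * w) (y0 + d2 * w) = LL m z0 x0 y0) ->
  f.@[pt3 (x0, y0, z0)] = 0.
Proof.
move=> Hf hP hA hL.
pose X : {poly C} := 'X * (x0%:P + d1 *: ('X - 1)).
pose Y : {poly C} := 'X * (y0%:P + d2 *: ('X - 1)).
pose Z : {poly C} := z0 *: 'X.
pose B := z0 * (x0 * d2 + y0 * d1) - 2%:R * x0 * d1 - 2%:R * y0 * d2.
pose h := (z0 * d1 * d2 - d1 ^+ 2 - d2 ^+ 2) *: ('X - 1) ^+ 2 + B *: ('X - 1)
          + (Fr x0 y0 z0)%:P.
have lptE u : u != 0 -> lpt X Y Z u = (x0 + d1 * (u - 1), y0 + d2 * (u - 1), z0).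
  move=> u0; rewrite /lpt /X /Y /Z !(hornerM, hornerD, hornerZ, hornerN, hornerX, hornerC).
  congr (_, _, _); field; exact: u0.
have := @dense C f X Y Z h (q2_neq0 B (Fr x0 y0 z0) hA).
rewrite lptE ?oner_neq0 // !subrr !mulr0 !addr0; apply.
move=> u u0 hu; rewrite lptE //; apply: Hf; apply: pirr_irr.
  by rewrite -hP; apply: Pirr_LL; apply: hL.
apply: contra hu => /eqP hF; apply/rootP.
have -> : h.[u] = Fr (x0 + d1 * (u - 1)) (y0 + d2 * (u - 1)) z0.
  rewrite /h !(hornerM, hornerD, hornerZ, hornerN, hornerX, hornerC, horner_exp) /Fr /B; ring.
by rewrite hF.
Qed.

Lemma hyp_case (m n : int) (x0 y0 z0 : C) (f : {mpoly C[3]}) :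
  (forall q, irr_chars m n q -> f.@[pt3 q] = 0) ->
  Pirr m n x0 y0 z0 = 0 ->
  cheb m z0 ^+ 2 - cheb (m - 1) z0 ^+ 2 != 0 ->
  x0 * cheb m z0 - y0 * cheb (m - 1) z0 != 0 ->
  f.@[pt3 (x0, y0, z0)] = 0.
Proof.
move=> Hf hP.
have he := cheb_id m z0.
set S := cheb m z0 in he *; set a := cheb (m - 1) z0 in he *.
move=> D0 l10.
set D := S ^+ 2 - a ^+ 2 in D0.
set l1 := x0 * S - y0 * a in l10; set l2 := y0 * S - x0 * a.
pose X : {poly C} := (S * l1 / D) *: 'X ^+ 2 + (a * l2 / D)%:P.
pose Y : {poly C} := (a * l1 / D) *: 'X ^+ 2 + (S * l2 / D)%:P.
pose Z : {poly C} := z0 *: 'X.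
pose e := S ^+ 2 - z0 * S * a + a ^+ 2.
pose k := 4%:R * S * a - z0 * (S ^+ 2 + a ^+ 2).
pose h := (- (e * l1 ^+ 2) / D ^+ 2) *: 'X ^+ 4
          + ((4%:R - z0 ^+ 2) - k * l1 * l2 / D ^+ 2) *: 'X ^+ 2
          + (- (e * l2 ^+ 2) / D ^+ 2)%:P.
have c4 : - (e * l1 ^+ 2) / D ^+ 2 != 0.
  have -> : e = 1 by rewrite -he /e; ring.
  by rewrite mul1r mulNr oppr_eq0 mulf_eq0 invr_eq0 !expf_eq0 /= (negbTE l10) (negbTE D0).
have := @dense C f X Y Z h (q4_neq0 _ _ c4).
have -> : lpt X Y Z 1 = (x0, y0, z0).
  rewrite /lpt /X /Y /Z !(hornerM, hornerD, hornerZ, hornerN, hornerX, hornerC, horner_exp).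
  rewrite /l1 /l2 /D; congr (_, _, _); field => //; exact: D0.
apply.
move=> u u0 hu.
set xu := (lpt X Y Z u).1.1; set yu := (lpt X Y Z u).1.2.
have -> : lpt X Y Z u = (xu, yu, z0).
  rewrite /xu /yu /lpt /Z !(hornerZ, hornerX); congr (_, _, _); field; exact: u0.
have xE : xu = ((S * l1 / D) * u ^+ 2 + a * l2 / D) / u.
  by rewrite /xu /lpt /X !(hornerM, hornerD, hornerZ, hornerN, hornerX, hornerC, horner_exp).
have yE : yu = ((a * l1 / D) * u ^+ 2 + S * l2 / D) / u.
  by rewrite /yu /lpt /Y !(hornerM, hornerD, hornerZ, hornerN, hornerX, hornerC, horner_exp).
apply: Hf; apply: pirr_irr.
  rewrite -hP; apply: Pirr_LL; rewrite /LL -/S -/a xE yE /l1 /l2 /D.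
  field; by rewrite u0 D0.
apply: contra hu => /eqP hF; apply/rootP.
have -> : h.[u] = u ^+ 2 * Fr xu yu z0.
  rewrite /h !(hornerM, hornerD, hornerZ, hornerN, hornerX, hornerC, horner_exp, hornerXn).
  rewrite /Fr xE yE /e /k /l1 /l2 /D; field; by rewrite u0 D0.
by rewrite hF mulr0.
Qed.

Lemma Xirr_of_pirr (m n : int) (x0 y0 z0 : C) :
  Pirr m n x0 y0 z0 = 0 -> X_irr m n (x0, y0, z0).
Proof.
move=> hP f Hf.
have he := cheb_id m z0.
set S := cheb m z0 in he; set a := cheb (m - 1) z0 in he.
case: (eqVneq (x0 * S - y0 * a) 0) => [l0|l0].
  apply: (line_case (d1 := a) (d2 := S) Hf hP).
    rewrite (_ : z0 * a * S - a ^+ 2 - S ^+ 2 = -1); first by rewrite oppr_eq0 oner_eq0.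
    by rewrite -he; ring.
  move=> w; rewrite /LL -/S -/a.
  have -> : (x0 + a * w) * S - (y0 + S * w) * a = x0 * S - y0 * a by ring.
  by rewrite l0 !mul0r.
case: (eqVneq (S ^+ 2 - a ^+ 2) 0) => [D0|D0]; last exact: (hyp_case Hf hP D0 l0).
have : (S - a) * (S + a) = 0 by rewrite -D0; ring.
move/eqP; rewrite mulf_eq0 => /orP [] /eqP hSa.
  have aS : a = S by apply/eqP; rewrite eq_sym -subr_eq0 hSa.
  apply: (line_case (d1 := 1) (d2 := 1) Hf hP).
    have e2 : S ^+ 2 * (2%:R - z0) = 1 by rewrite -[RHS]he aS; ring.
    apply/eqP => hz; have : S ^+ 2 * (2%:R - z0) = 0.
      by apply: (eq_by (k := -(S ^+ 2)) hz); ring.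
    by rewrite e2 => /eqP; rewrite oner_eq0.
  move=> w; rewrite /LL -/S -/a aS; ring.
have aS : a = - S by apply/eqP; rewrite -addr_eq0 addrC hSa.
apply: (line_case (d1 := 1) (d2 := -1) Hf hP).
  have e2 : S ^+ 2 * (2%:R + z0) = 1 by rewrite -[RHS]he aS; ring.
  apply/eqP => hz; have : S ^+ 2 * (2%:R + z0) = 0.
    by apply: (eq_by (k := -(S ^+ 2)) hz); ring.
  by rewrite e2 => /eqP; rewrite oner_eq0.
move=> w; rewrite /LL -/S -/a aS; ring.
Qed.

End Curves.

Unset Implicit Arguments.

Theorem theorem1p1 (C : numClosedFieldType) (m n : int) (hm : m != 0) :
  (forall x y z : C,
      x * y * z + 4 - x ^+ 2 - y ^+ 2 - z ^+ 2 = 0 <-> red_chars m n (x, y, z))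
  /\
  (forall x y z : C, X_irr m n (x, y, z) <-> Pirr m n x y z = 0).
Proof.
split.
  move=> x y z; split; first exact: Fr_red.
  exact: red_Fr.
move=> x y z; split; last exact: Xirr_of_pirr.
move=> H; have := H (Pirr m n ('X_i30 : {mpoly C[3]}) 'X_i31 'X_i32).
rewrite meval_Pirr /=; apply.
move=> [[a b] c] [A [B [hr [nr hc]]]].
rewrite meval_Pirr /=.
move: hc; rewrite /charpt => [[<- <- <-]].
exact: irr_pirr.
Qed.
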